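(* Let $P=\{p_1,\dots,p_n\}\subset\mathbb{R}^2$ be in convex position, labeled counter-clockwise (indices mod $n$), and let $T$ be a triangulation of $P$. Let $d=(d_{ij})$ be the point of the polyhedron $Y$ satisfying $d_{ij}=0$ for all edges $ij$ of $T$ (the vertex of $Y$ corresponding to $T$). Then for every $i$, $$d_{i-1,i+1}=-\det(p_{i-1},p_i,p_{i+1})\bigl(\operatorname{Area}_T(p_i)-\det(p_{i-1},p_i,p_{i+1})\bigr).$$
   Context: $\det(q_0,q_1,q_2)$ is the determinant of the $3\times3$ matrix with columns $(q_0,1),(q_1,1),(q_2,1)$; with counter-clockwise labeling, $\det(p_i,p_j,p_k)>0$ iff $i,j,k$ are in cyclic order. $\operatorname{Area}_T(p_i)=\sum_{l=1}^{t-1}\det(p_i,p_{j_l},p_{j_{l+1}})$ where $p_{j_1},\dots,p_{j_t}$ are the neighbors of $p_i$ in $T$ in angular order from $p_{j_1}=p_{i+1}$ to $p_{j_t}=p_{i-1}$ (twice the total area of the triangles of $T$ at $p_i$). $Y\subset\mathbb{R}^{\binom n2}$ (coordinates $d_{ij}=d_{ji}$) is defined by $d_{ij}\le0$ for all pairs and, for every four distinct indices, $\sum w_{\alpha\beta}d_{\alpha\beta}=1$ over the six pairs of the quadruple, with $w_{\alpha\beta}=1/(\det(p_\alpha,p_\beta,p_\gamma)\det(p_\alpha,p_\beta,p_\delta))$, $\{\gamma,\delta\}$ the other two indices. *)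

(* Defs.v *)
From mathcomp Require Import all_boot all_order all_algebra.
Set Implicit Arguments. Unset Strict Implicit. Unset Printing Implicit Defensive.
Import Order.TTheory GRing.Theory Num.Theory.
Local Open Scope ring_scope.

Section Defs.
Variable R : realFieldType.

Definition det3 (q0 q1 q2 : R * R) : R :=
  \det (\matrix_(r < 3, c < 3)
          (let q := nth q0 [:: q0; q1; q2] c in
           if (r == 0 :> nat) then q.1 else if (r == 1 :> nat) then q.2 else 1)).

Variable n : nat.

(* i, j, k are pairwise distinct and in counter-clockwise cyclic order of indices *)
Definition cyclic (i j k : 'I_n) : bool :=
  [&& i != j, j != k, i != k &
      ((j + n - i) %% n < (k + n - i) %% n)%N].

Definition ccw_convex (p : 'I_n -> R * R) : Prop :=
  forall i j k : 'I_n, (0 < det3 (p i) (p j) (p k)) = cyclic i j k.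

Definition seg_cross (p : 'I_n -> R * R) (a b c d : 'I_n) : bool :=
  (det3 (p a) (p b) (p c) * det3 (p a) (p b) (p d) < 0) &&
  (det3 (p c) (p d) (p a) * det3 (p c) (p d) (p b) < 0).

Definition triangulation (p : 'I_n -> R * R) (T : rel 'I_n) : Prop :=
  [/\ forall i, ~~ T i i,
      forall i j, T i j = T j i,
      forall a b c d, T a b -> T c d -> ~~ seg_cross p a b c d &
      forall a b, a != b -> ~~ T a b ->
        exists c d, T c d /\ seg_cross p a b c d].

Definition nbrs_sorted (p : 'I_n -> R * R) (T : rel 'I_n) (i : 'I_n) : seq 'I_n :=
  sort (fun j k => 0 < det3 (p i) (p j) (p k)) [seq j <- enum 'I_n | T i j].

Definition AreaT (p : 'I_n -> R * R) (T : rel 'I_n) (i : 'I_n) : R :=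
  let s := nbrs_sorted p T i in
  \sum_(jk <- zip s (behead s)) det3 (p i) (p jk.1) (p jk.2).

(* weighted term w_{ab} d_{ab}, {c,e} being the other two indices *)
Definition wterm (p : 'I_n -> R * R) (d : 'I_n -> 'I_n -> R) (a b c e : 'I_n) : R :=
  d a b / (det3 (p a) (p b) (p c) * det3 (p a) (p b) (p e)).

Definition inY (p : 'I_n -> R * R) (d : 'I_n -> 'I_n -> R) : Prop :=
  (forall i j, d i j = d j i) /\
  (forall i j, i != j -> d i j <= 0) /\
  (forall a b c e : 'I_n, uniq [:: a; b; c; e] ->
     wterm p d a b c e + wterm p d a c b e + wterm p d a e b c
   + wterm p d b c a e + wterm p d b e a c + wterm p d c e a b = 1).

End Defs.

(* Main.v *)
Require Import Defs.
From mathcomp Require Import all_boot all_order all_algebra.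
From mathcomp Require Import ring lra zify.
Import Order.TTheory GRing.Theory Num.Theory.
Local Open Scope ring_scope.
Set Implicit Arguments. Unset Strict Implicit. Unset Printing Implicit Defensive.

Lemma det3E (R : realFieldType) (a b c : R * R) :
  det3 a b c = a.1 * b.2 - a.1 * c.2 - b.1 * a.2 + b.1 * c.2 + c.1 * a.2 - c.1 * b.2.
Proof.
rewrite /det3 (expand_det_row _ ord0) !big_ord_recr !big_ord0 /=.
rewrite /cofactor !(expand_det_row _ ord0) !big_ord_recr !big_ord0 /=.
rewrite /cofactor !det_mx11 !mxE /=.
ring.
Qed.

Lemma det_rot (R : realFieldType) (a b c : R * R) : det3 a b c = det3 b c a.
Proof. rewrite !det3E; ring. Qed.
Lemma det_swap (R : realFieldType) (a b c : R * R) : det3 a b c = - det3 b a c.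
Proof. rewrite !det3E; ring. Qed.
Lemma det_swap23 (R : realFieldType) (a b c : R * R) : det3 a b c = - det3 a c b.
Proof. rewrite !det3E; ring. Qed.
Lemma det_split (R : realFieldType) (c x y z : R * R) :
  det3 x y z = det3 c x y + det3 c y z - det3 c x z.
Proof. rewrite !det3E; ring. Qed.

Lemma alg (R : realFieldType) (Aw Az E S X Bw : R) : Aw != 0 -> Az != 0 -> Bw != 0 ->
  Bw = Aw + E - Az ->
  (- Aw * (S - Aw)) / (Aw * Bw) + X / (Az * - Bw) = 1 -> X = - Az * (S + E - Az).
Proof.
move=> hA hZ hB hBw heq.
have h : X = (1 - (- Aw * (S - Aw)) / (Aw * Bw)) * (Az * - Bw).
  rewrite -heq; field; rewrite hA hZ hB //.
rewrite h hBw; field.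
rewrite hA; move: hB; rewrite hBw => -> //.
Qed.

Lemma modhelp n a b : (a < n)%N -> (b < n)%N ->
  ((b + n - a) %% n = if (a <= b)%N then b - a else b + n - a)%N.
Proof.
move=> Ha Hb; case: leqP => H.
  by rewrite -addnBAC // modnDr modn_small // ltn_subLR ?(leq_trans Hb) ?leq_addl.
by rewrite modn_small //; lia.
Qed.

Lemma cycE n (a b c : 'I_n) : cyclic a b c =
  [|| (a < b < c)%N, (b < c < a)%N | (c < a < b)%N].
Proof.
rewrite /cyclic !modhelp // -!val_eqE.
case: a b c => a Ha [b Hb] [c Hc] /=.
case: (leqP a b) => ?; case: (leqP a c) => ?;
 apply/idP/idP; lia.
Qed.

Lemma ordSE n (i : 'I_n) : val (ordS i) = if i.+1 == n then 0%N else i.+1.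
Proof.
rewrite /=; case: eqP => [->|h]; first by rewrite modnn.
by rewrite modn_small //; have := ltn_ord i; lia.
Qed.

Lemma ord_predE n (i : 'I_n) : val (ord_pred i) = if val i == 0%N then n.-1 else (val i).-1.
Proof.
have := ltn_ord i; rewrite /=; case: eqP => [->|h] Hi.
  by rewrite add0n modn_small //; lia.
have -> : ((i + n).-1 = i.-1 + n)%N by lia.
by rewrite modnDr modn_small //; lia.
Qed.

Definition SX {n} (a b c e : 'I_n) :=
  (cyclic a b c && cyclic b a e) || (cyclic b a c && cyclic a b e).

Ltac cyc := rewrite /SX ?cycE ?ordSE ?ord_predE -?val_eqE /=.

Lemma SX_sym n (a b c e : 'I_n) : SX a b c e -> SX c e a b.
Proof. cyc; lia. Qed.

Lemma SX_swap n (a b c e : 'I_n) : SX a b c e = SX b a c e.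
Proof. by rewrite /SX orbC. Qed.

Lemma adjA1 n (i x y e : 'I_n) : cyclic i x y -> cyclic y x e ->
   ~~ [|| e == x, e == y, cyclic i e x | cyclic i y e].
Proof. cyc; lia. Qed.

Lemma adjA0 n (i x y c : 'I_n) : cyclic i x y -> cyclic x y c -> c != i ->
  cyclic i y c || cyclic i c x.
Proof. cyc; lia. Qed.

Lemma adjA2 n (i x y c e : 'I_n) : cyclic i x y -> cyclic y x e -> cyclic i y c ->
  SX c e i y.
Proof. cyc; lia. Qed.

Lemma adjA3 n (i x y c e : 'I_n) : cyclic i x y -> cyclic y x e -> cyclic i c x ->
  SX c e i x.
Proof. cyc; lia. Qed.

Lemma adj_comb n (i x y c e : 'I_n) : cyclic i x y -> SX x y c e ->
  ~~ SX c e i x -> ~~ SX c e i y -> c != e ->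
  (c == i -> [|| e == x, e == y, cyclic i e x | cyclic i y e]) ->
  (e == i -> [|| c == x, c == y, cyclic i c x | cyclic i y c]) -> False.
Proof.
move=> hixy hSX hn1 hn2 _ hci hei.
case/orP: hSX => /andP[h1 h2].
- have [eci|nci] := eqVneq c i.
    by move: (hci (introT eqP eci)); apply/negP; apply: adjA1 hixy h2.
  case/orP: (adjA0 hixy h1 nci) => h3.
    by move: hn2; rewrite (adjA2 _ h2 h3).
  by move: hn1; rewrite (adjA3 _ h2 h3).
- rewrite SX_swap in hn1; rewrite SX_swap in hn2.
  have [eei|nei] := eqVneq e i.
    by move: (hei (introT eqP eei)); apply/negP; apply: adjA1 hixy h1.
  case/orP: (adjA0 hixy h2 nei) => h3.
    by move: hn2; rewrite (adjA2 _ h1 h3).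
  by move: hn1; rewrite (adjA3 _ h1 h3).
Qed.

Lemma cyc_trans n (i x y z : 'I_n) : cyclic i x y -> cyclic i y z -> cyclic i x z.
Proof. cyc; lia. Qed.

Lemma cyc_irr n (i x : 'I_n) : ~~ cyclic i x x.
Proof. cyc; lia. Qed.

Lemma cyc_or n (a b c : 'I_n) : a != b -> b != c -> a != c -> cyclic a b c || cyclic b a c.
Proof. cyc; lia. Qed.

Lemma cyc_ordS n (i z : 'I_n) : ~~ cyclic (ordS i) i z.
Proof. have := ltn_ord i; have := ltn_ord z; cyc; case: ifP => /eqP; lia. Qed.

Lemma cyc_ordS2 n (i z : 'I_n) : ~~ cyclic i z (ordS i).
Proof. have := ltn_ord i; have := ltn_ord z; cyc; case: ifP => /eqP; lia. Qed.

Lemma cyc_pred n (i z : 'I_n) : ~~ cyclic i (ord_pred i) z.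
Proof. have := ltn_ord i; have := ltn_ord z; cyc; case: ifP => /eqP; lia. Qed.

Lemma ordS_neq n (i : 'I_n) : (3 <= n)%N ->
  [&& ordS i != i, ord_pred i != i & ordS i != ord_pred i].
Proof. move=> hn; have := ltn_ord i; rewrite -!val_eqE !ordSE !ord_predE /=; case: ifP => /eqP ?; case: ifP => /eqP ?; lia. Qed.

Lemma cyc_or2 n (i j k : 'I_n) : i != j -> i != k -> j != k -> cyclic i j k || cyclic i k j.
Proof. cyc; lia. Qed.

Lemma cyc_neq n (a b c : 'I_n) : cyclic a b c -> b != c.
Proof. cyc; lia. Qed.

Lemma merge_eq (T : eqType) (le1 le2 : rel T) s1 s2 :
  (forall x y, x \in s1 -> y \in s2 -> le1 x y = le2 x y) ->
  merge le1 s1 s2 = merge le2 s1 s2.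
Proof.
elim: s1 s2 => [|x s1 IH] s2 //.
elim: s2 => [|y s2 IH2] //= hH.
rewrite hH ?mem_head //.
case: ifP => _.
  by congr cons; apply: IH => u v hu hv; apply: hH => //; rewrite inE hu orbT.
congr cons; apply: IH2 => u v hu hv; apply: hH => //; last by rewrite inE hv orbT.
Qed.

Section SortEq.
Variables (T : eqType) (P : pred T) (le1 le2 : rel T).
Hypothesis H : {in P &, forall x y, x != y -> le1 x y = le2 x y}.

Lemma merge_eq2 s1 s2 : all P (s1 ++ s2) -> uniq (s1 ++ s2) ->
  merge le1 s1 s2 = merge le2 s1 s2.
Proof.
move=> hP hU; apply: merge_eq => x y hx hy.
move: hP; rewrite all_cat => /andP[/allP h1 /allP h2].
apply: H; [exact: h1|exact: h2|].
apply/eqP => exy; move: hU; rewrite cat_uniq => /and3P[_ /hasP hh _].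
by apply: hh; exists y => //; rewrite -exy.
Qed.

Lemma pcC (s1 s2 : seq T) : perm_eq (s1 ++ s2) (s2 ++ s1).
Proof. by rewrite perm_catC. Qed.

Lemma push_eq s1 ss : all P (s1 ++ flatten ss) -> uniq (s1 ++ flatten ss) ->
  merge_sort_push le1 s1 ss = merge_sort_push le2 s1 ss
  /\ perm_eq (flatten (merge_sort_push le1 s1 ss)) (s1 ++ flatten ss).
Proof.
elim: ss s1 => [|[|x s2] ss IH] s1 /= hP hU; first by rewrite perm_refl.
  by rewrite perm_refl.
have hm : merge le1 (x :: s2) s1 = merge le2 (x :: s2) s1.
  apply: merge_eq2.
    rewrite (eq_all_r (perm_mem (pcC _ _))).
    by move: hP; rewrite -cat_cons catA all_cat => /andP[].
  rewrite (perm_uniq (pcC _ _)).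
  by move: hU; rewrite -cat_cons catA => /(subseq_uniq (prefix_subseq _ _)).
have hperm : perm_eq (merge le1 (x :: s2) s1 ++ flatten ss) ((s1 ++ x :: s2) ++ flatten ss).
  by rewrite perm_cat2r perm_merge pcC.
have h1 : all P (merge le1 (x :: s2) s1 ++ flatten ss).
  by rewrite (eq_all_r (perm_mem hperm)) -catA.
have h2 : uniq (merge le1 (x :: s2) s1 ++ flatten ss).
  by rewrite (perm_uniq hperm) -catA.
have [e1 e2] := IH _ h1 h2.
rewrite -hm e1; split => //.
by rewrite -e1 (permPl e2) -catA in hperm *.
Qed.
Lemma pop_eq s1 ss : all P (s1 ++ flatten ss) -> uniq (s1 ++ flatten ss) ->
  merge_sort_pop le1 s1 ss = merge_sort_pop le2 s1 ss.
Proof.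
elim: ss s1 => [|s2 ss IH] s1 //= hP hU.
have hm : merge le1 s2 s1 = merge le2 s2 s1.
  apply: merge_eq2.
    rewrite (eq_all_r (perm_mem (pcC _ _))).
    by move: hP; rewrite catA all_cat => /andP[].
  rewrite (perm_uniq (pcC _ _)).
  by move: hU; rewrite catA => /(subseq_uniq (prefix_subseq _ _)).
have hperm : perm_eq (merge le1 s2 s1 ++ flatten ss) ((s1 ++ s2) ++ flatten ss).
  by rewrite perm_cat2r perm_merge pcC.
rewrite -hm; apply: IH.
  by rewrite (eq_all_r (perm_mem hperm)) -catA.
by rewrite (perm_uniq hperm) -catA.
Qed.

Lemma rec1_eq ss s : all P (flatten ss ++ s) -> uniq (flatten ss ++ s) ->
  sort_rec1 le1 ss s = sort_rec1 le2 ss s.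
Proof.
elim: s ss => [|x s IH] ss /= hP hU.
  by apply: pop_eq; rewrite /= ?cats0 in hP hU *.
have hP' : all P ([:: x] ++ flatten ss).
  apply/allP => z; rewrite mem_cat inE => hz; apply: (allP hP); rewrite mem_cat inE.
  by case/orP: hz => ->; rewrite ?orbT.
have hU' : uniq ([:: x] ++ flatten ss).
  move: hU; rewrite -cat1s catA => /(subseq_uniq (prefix_subseq _ _)).
  by rewrite (perm_uniq (pcC _ _)).
have [e1 e2] := @push_eq [:: x] ss hP' hU'.
have hperm : perm_eq (flatten (merge_sort_push le1 [:: x] ss) ++ s) (flatten ss ++ x :: s).
  rewrite (permPl (perm_cat e2 (perm_refl s))) /= -cat1s.
  by rewrite perm_catCA.
rewrite -e1; apply: IH.
  by rewrite (eq_all_r (perm_mem hperm)).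
by rewrite (perm_uniq hperm).
Qed.

Lemma sort_eq s : all P s -> uniq s -> sort le1 s = sort le2 s.
Proof. by move=> hP hU; rewrite !sortE; apply: rec1_eq. Qed.
End SortEq.

Lemma sorted_strict (X : eqType) (r : rel X) s :
  uniq s -> sorted (fun x y => (x == y) || r x y) s -> sorted r s.
Proof.
case: s => // x s; elim: s x => [|y s IH] x //= /andP[hx hu] /andP[hxy hp].
apply/andP; split; last by apply: IH.
move: hxy; case: eqP => [exy|_] //=.
by move: hx; rewrite exy inE eqxx.
Qed.

Lemma path_of_adj (X : Type) (e : rel X) x0 s :
  (forall s1 u v s2, x0 :: s = s1 ++ u :: v :: s2 -> e u v) -> path e x0 s.
Proof.
elim: s x0 => [|y s IH] x0 h //=; apply/andP; split.
  exact: (h [::] x0 y s).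
apply: IH => s1 u v s2 E; apply: (h (x0 :: s1) u v s2).
by rewrite E.
Qed.

Lemma between (X : eqType) (r : rel X) (tr : transitive r) s1 u v s2 :
  sorted r (s1 ++ u :: v :: s2) ->
  r u v /\ forall z, z \in s1 ++ u :: v :: s2 -> [|| z == u, z == v, r z u | r v z].
Proof.
rewrite sorted_pairwise // pairwise_cat => /and3P[/allrelP hall _].
rewrite pairwise_cons => /andP[/andP[huv _] /andP[/allP hv _]]; split => // z.
rewrite mem_cat => /orP[hz|].
  by rewrite (hall z u hz (mem_head _ _)) !orbT.
rewrite !inE => /orP[->//|/orP[->|hz]]; first by rewrite orbT.
by rewrite hv ?orbT.
Qed.

Fixpoint fs (X : Type) (R : realFieldType) (F : X -> X -> R) x l :=
  if l is y :: l' then F x y + fs F y l' else 0.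

Lemma fsE (X : Type) (R : realFieldType) (F : X -> X -> R) x l :
  \sum_(jk <- zip (x :: l) l) F jk.1 jk.2 = fs F x l.
Proof. by elim: l x => [|y l IH] x /=; rewrite ?big_nil // big_cons IH. Qed.

Lemma fs_rcons (X : Type) (R : realFieldType) (F : X -> X -> R) x l z :
  fs F x (rcons l z) = fs F x l + F (last x l) z.
Proof. by elim: l x => [|y l IH] x /=; rewrite ?add0r ?addr0 // IH addrA. Qed.


Section Main.
Variables (R : realFieldType) (n : nat) (p : 'I_n -> R * R) (T : rel 'I_n)
  (d : 'I_n -> 'I_n -> R).
Hypothesis hconv : ccw_convex p.
Hypothesis htri : triangulation p T.
Hypothesis hY : inY p d.
Hypothesis hz : forall i j, T i j -> d i j = 0.

Local Notation D a b c := (det3 (p a) (p b) (p c)).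

Lemma dpos a b c : cyclic a b c -> 0 < D a b c.
Proof. by rewrite hconv. Qed.
Lemma dneg a b c : cyclic b a c -> D a b c < 0.
Proof. by rewrite det_swap oppr_lt0 hconv. Qed.
Lemma pos_cyc a b c : 0 < D a b c -> cyclic a b c.
Proof. by rewrite hconv. Qed.
Lemma neg_cyc a b c : D a b c < 0 -> cyclic b a c.
Proof. by rewrite det_swap oppr_lt0 hconv. Qed.
Lemma dneq0 a b c : a != b -> b != c -> a != c -> D a b c != 0.
Proof.
move=> h1 h2 h3; case/orP: (cyc_or h1 h2 h3) => [/dpos|/dneg] h.
  exact: lt0r_neq0.
exact: ltr0_neq0.
Qed.

Lemma cross_SX a b c e : seg_cross p a b c e -> SX a b c e.
Proof.
case/andP=> h _; rewrite /SX.
have [hx|hx|hx] := ltgtP (D a b c) 0.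
- have hy : 0 < D a b e.
    rewrite ltNge; apply/negP => hy.
    by have := mulr_le0 (ltW hx) hy; rewrite leNgt h.
  by rewrite (neg_cyc hx) (pos_cyc hy) orbT.
- have hy : D a b e < 0.
    rewrite ltNge; apply/negP => hy.
    by have := mulr_ge0 (ltW hx) hy; rewrite leNgt h.
  by rewrite (pos_cyc hx) (neg_cyc hy).
- by move: h; rewrite hx mul0r ltxx.
Qed.

Lemma SX_cross a b c e : SX a b c e -> seg_cross p a b c e.
Proof.
move=> h; have h' := SX_sym h; apply/andP; split.
- case/orP: h => /andP[h1 h2].
    by rewrite pmulr_rlt0 ?dpos // dneg.
  by rewrite nmulr_rlt0 ?dneg // dpos.
- case/orP: h' => /andP[h1 h2].
    by rewrite pmulr_rlt0 ?dpos // dneg.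
  by rewrite nmulr_rlt0 ?dneg // dpos.
Qed.

Lemma fan c x y r : uniq [:: c, x, y & r] -> all (T c) [:: x, y & r] ->
  path T x (y :: r) ->
  d x (last y r) = - D c x (last y r) *
     (fs (fun u v => D c u v) x (y :: r) - D c x (last y r)).
Proof.
elim/last_ind: r => [|r z IH].
  by move=> _ _ /= /andP[hxy _]; rewrite hz //=; ring.
rewrite last_rcons.
change [:: c, x, y & rcons r z] with (rcons [:: c, x, y & r] z).
change [:: x, y & rcons r z] with (rcons [:: x, y & r] z).
change (y :: rcons r z) with (rcons (y :: r) z).
rewrite rcons_uniq all_rcons rcons_path fs_rcons [last x _]/=.
move=> /andP[hzn hu] /andP[hTz ha] /andP[hp hTwz].
have IH' := IH hu ha hp.
set w := last y r in IH' hTwz *.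
have hw : w \in y :: r by apply: mem_last.
move: (hu) => /=; rewrite !inE !negb_or => /andP[/and3P[hcx hcy hcr] /andP[/andP[hxy hxr] _]].
have hcw : c != w.
  by move: hw; rewrite inE => /orP[/eqP->|h] //; apply/eqP => ecw; move: hcr; rewrite ecw h.
have hxw : x != w.
  by move: hw; rewrite inE => /orP[/eqP->|h] //; apply/eqP => ecw; move: hxr; rewrite ecw h.
move: hzn; rewrite !inE !negb_or => /and4P[hzc hzx hzy hzr].
have hzw : z != w.
  by move: hw; rewrite inE => /orP[/eqP->|h] //; apply/eqP => ecw; move: hzr; rewrite ecw h.
have huq : uniq [:: c; x; w; z].
  rewrite /= !inE !negb_or hcx hcw hxw (eq_sym c z) hzc (eq_sym x z) hzx (eq_sym w z) hzw.
  by [].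
have hq := hY.2.2 c x w z huq; rewrite /wterm in hq.
have hTcx : T c x by move: ha => /andP[].
have hTcw : T c w by apply: (allP ha); rewrite inE hw orbT.
rewrite (hz hTcx) (hz hTcw) (hz hTz) (hz hTwz) !mul0r !add0r !addr0 in hq.
rewrite IH' in hq.
rewrite -(det_rot (p c) (p x) (p w)) -(det_rot (p c) (p x) (p z)) in hq.
rewrite (det_swap23 (p x) (p z) (p w)) in hq.
apply: (alg _ _ _ _ hq).
- by apply: dneq0.
- by apply: dneq0; rewrite // eq_sym.
- by apply: dneq0; rewrite // eq_sym.
- exact: det_split.
Qed.

Lemma main (hn : (3 <= n)%N) i :
  d (ord_pred i) (ordS i) =
      - det3 (p (ord_pred i)) (p i) (p (ordS i))
        * (AreaT p T i - det3 (p (ord_pred i)) (p i) (p (ordS i))).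
Proof.
have [hirr hsymT hnc hmax] := htri.
rewrite /AreaT /=.
set a := ord_pred i; set b := ordS i.
have /and3P[hbi hai hba] := ordS_neq i hn.
have hTb : T i b.
  apply/negPn/negP => hn'.
  have [c [e [hce hx]]] := hmax i b (negbT (introF eqP (fun h => negP hbi (introT eqP (esym h))))) hn'.
  move/cross_SX: hx; rewrite /SX => /orP[/andP[_ h]|/andP[h _]];
    by move: h; rewrite (negbTE (cyc_ordS i _)).
have hTa : T i a.
  apply/negPn/negP => hn'.
  have [c [e [hce hx]]] := hmax i a (negbT (introF eqP (fun h => negP hai (introT eqP (esym h))))) hn'.
  move/cross_SX: hx; rewrite /SX => /orP[/andP[h _]|/andP[_ h]];
    by move: h; rewrite (negbTE (cyc_pred i _)).
set s0 := [seq j <- enum 'I_n | T i j].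
have hs0P : all (predC1 i) s0.
  apply/allP => j; rewrite mem_filter => /andP[hj _] /=.
  by apply/eqP => eji; move: hj; rewrite eji (negbTE (hirr i)).
have hs0U : uniq s0 by apply: filter_uniq; apply: enum_uniq.
set le2 := fun j k : 'I_n => (j == k) || cyclic i j k.
set s := nbrs_sorted p T i.
have hs : s = sort le2 s0.
  apply: (sort_eq (P := predC1 i)) => // j k hj hk hjk.
  by rewrite /le2 (negbTE hjk) /= hconv.
have hsorted2 : sorted le2 (sort le2 s0).
  apply: (sort_sorted_in (P := predC1 i)) => // j k hj hk.
  rewrite /le2; case: (eqVneq j k) => //= hjk.
  move: hj hk; rewrite !inE => hj hk; apply: cyc_or2 => //; by rewrite eq_sym.
have hU : uniq s by rewrite hs sort_uniq.
have hsorted : sorted (cyclic i) s.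
  by apply: sorted_strict => //; rewrite hs.
have hmem : forall z, (z \in s) = T i z.
  by move=> z; rewrite hs mem_sort mem_filter mem_enum andbT.
have htr : transitive (cyclic i) by move=> y x z; apply: cyc_trans.
have hpw : pairwise (cyclic i) s by rewrite -sorted_pairwise.
have hbs : b \in s by rewrite hmem.
have has : a \in s by rewrite hmem.
have his : i \notin s by rewrite hmem hirr.
have hpath : path T (head i s) (behead s).
  case Es: s => [|x l] //=; apply: path_of_adj => s1 u v s2 Es'.
  have hs' : sorted (cyclic i) (s1 ++ u :: v :: s2) by rewrite -Es' -Es.
  have hmem' : forall z, (z \in s1 ++ u :: v :: s2) = T i z by move=> z; rewrite -Es' -Es hmem.
  have [huv hbet] := between htr hs'.
  apply/negPn/negP => hnuv.
  have [c [e [hce hx]]] := hmax u v (cyc_neq huv) hnuv.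
  apply: (adj_comb huv (cross_SX hx)).
  - by apply/negP => /SX_cross; apply/negP; apply: hnc => //; rewrite -hmem'; rewrite mem_cat !inE eqxx !orbT.
  - by apply/negP => /SX_cross; apply/negP; apply: hnc => //; rewrite -hmem'; rewrite mem_cat !inE eqxx !orbT.
  - by apply/eqP => ece; move: hce; rewrite ece (negbTE (hirr e)).
  - by move/eqP => eci; apply: hbet; rewrite hmem' -eci.
  - by move/eqP => eei; apply: hbet; rewrite hmem' -eei hsymT.
clearbody s.
case Es: s hpath => [|x [|y r]] /= hpath.
- by rewrite Es in hbs.
- by move: hbs has; rewrite Es !inE => /eqP hb /eqP ha'; move: hba; rewrite -/a -/b hb ha' eqxx.
have hx : x = b.
  move: hpw hbs; rewrite Es pairwise_cons => /andP[/allP hall _] hbs.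
  apply/eqP; apply/negPn/negP => hxb.
  move: hbs; rewrite inE eq_sym (negbTE hxb) /= => hb.
  by move: (hall b hb); rewrite (negbTE (cyc_ordS2 i x)).
have hl : last y r = a.
  move: hpw has; rewrite Es (lastI x (y :: r)) pairwise_rcons mem_rcons inE.
  move=> /andP[/allP hall _] /orP[/eqP -> // | ha'].
  by move: (hall a ha'); rewrite (negbTE (cyc_pred i _)).
have hu' : uniq [:: i, x, y & r] by rewrite cons_uniq -Es his hU.
have ha' : all (T i) [:: x, y & r] by apply/allP => z; rewrite -Es hmem.
have hfan := fan hu' ha' hpath.
rewrite (hY.1 a b) -hx -hl hfan big_cons (fsE (fun u v => D i u v) y r) /=.
by rewrite (det_rot (p (last y r)) (p i) (p x)).
Qed.
End Main.

Unset Implicit Arguments.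

Theorem lemma5p4 (R : realFieldType) (n : nat) (p : 'I_n -> R * R)
    (T : rel 'I_n) (d : 'I_n -> 'I_n -> R) :
  (3 <= n)%N ->
  ccw_convex p ->
  triangulation p T ->
  inY p d ->
  (forall i j, T i j -> d i j = 0) ->
  forall i : 'I_n,
    d (ord_pred i) (ordS i) =
      - det3 (p (ord_pred i)) (p i) (p (ordS i))
        * (AreaT p T i - det3 (p (ord_pred i)) (p i) (p (ordS i))).
Proof.
move=> hn hc ht hy hzz i.
exact: (main hc ht hy hzz hn i).
Qed.
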